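(* Let $C$ be a coin operator on $\mathcal H=\ell^2(\mathbb{Z})\otimes\mathbb{C}^2$ with local unitary coins $C(k)$, let $U=SC$ with $S=S_+S_-$, and for $\Phi\in\mathbb{R}$ let $U_\Phi=F_\Phi U$ with $F_\Phi=e^{i\Phi Q}$. Then, with respect to the decomposition $\mathcal H=\mathcal H_e\oplus\mathcal H_o$ into even and odd lattice sites (each identified with $\ell^2(\mathbb{Z})\otimes\mathbb{C}^2$ as below), $$U_{\Phi/2}^2=\left(e^{-i\Phi/2}\tilde F_\Phi W\right)\oplus\left(e^{i\Phi/2}\tilde F_\Phi\tilde W\right),$$ where $W=S_+C_1S_-C_2$ and $\tilde W=S_+\tilde C_1S_-\tilde C_2$ have local coins $C_1(k)=C(2k+1)$, $C_2(k)=C(2k)$, $\tilde C_1(k)=C(2k+2)$, $\tilde C_2(k)=C(2k+1)$, and $\tilde F_\Phi=\left(\mathbb{1}_{\mathbb{Z}}\otimes\begin{bmatrix}1&0\\0&e^{i\Phi}\end{bmatrix}\right)e^{2i\Phi Q}$ acts on $\ell^2(\mathbb{Z})\otimes\mathbb{C}^2$.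
   Context: $\mathcal H=\ell^2(\mathbb{Z})\otimes\mathbb{C}^2$ with basis $\delta_k^\pm=\delta_k\otimes e_\pm$, $e_+=(1,0)^\top$, $e_-=(0,1)^\top$. $T$ is the bilateral shift $\delta_k\mapsto\delta_{k+1}$, $P_\pm=|e_\pm\rangle\langle e_\pm|$, $S_\pm=T^{\pm1}\otimes P_\pm+\mathbb{1}_{\mathbb{Z}}\otimes P_\mp$. A coin operator acts as $C(\delta_k\otimes v)=\delta_k\otimes C(k)v$. $Q$ is the position operator $Q\delta_k^\pm=k\delta_k^\pm$ (on whichever copy of $\ell^2(\mathbb{Z})\otimes\mathbb{C}^2$ is considered). $\mathcal H_e=\ell^2(2\mathbb{Z})\otimes\mathbb{C}^2$, $\mathcal H_o=\ell^2(2\mathbb{Z}+1)\otimes\mathbb{C}^2$, identified with $\ell^2(\mathbb{Z})\otimes\mathbb{C}^2$ via $\delta_{2k}^\pm\mapsto\delta_k^\pm$ and $\delta_{2k+1}^\pm\mapsto\delta_k^\pm$ respectively. *)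

(* Defs.v *)
From HB Require Import structures.
From mathcomp Require Import all_boot all_order all_algebra.
From mathcomp Require Import spectral.
From mathcomp Require Import complex.
From mathcomp Require Import reals trigo.
Set Implicit Arguments. Unset Strict Implicit. Unset Printing Implicit Defensive.
Import Order.TTheory GRing.Theory Num.Theory.
Local Open Scope ring_scope.
Local Open Scope complex_scope.

Section QW.
Variable R : realType.
Local Notation C := R[i].

(* Vectors of l^2(Z) (x) C^2 are modelled by functions Z -> C^2; all operators
   below are local (finite band), so they act on arbitrary such functions. *)
Definition vec := int -> 'cV[C]_2.
Definition op := vec -> vec.

Definition e_plus : 'I_2 := ord0.
Definition e_minus : 'I_2 := @Ordinal 2 1 isT.
Definition Pplus : 'M[C]_2 := delta_mx e_plus e_plus.
Definition Pminus : 'M[C]_2 := delta_mx e_minus e_minus.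

Definition expi (t : R) : C := (cos t) +i* (sin t).

(* S_+ = T (x) P_+ + 1 (x) P_-,  S_- = T^{-1} (x) P_- + 1 (x) P_+,
   where T delta_k = delta_{k+1}, i.e. (T psi)(k) = psi(k-1). *)
Definition Splus : op := fun psi k => Pplus *m psi (k - 1) + Pminus *m psi k.
Definition Sminus : op := fun psi k => Pminus *m psi (k + 1) + Pplus *m psi k.

Definition coin (c : int -> 'M[C]_2) : op := fun psi k => c k *m psi k.

Definition Fphase (Phi : R) : op := fun psi k => expi (Phi * k%:~R) *: psi k.

Definition Ftilde (Phi : R) : op :=
  fun psi k => (Pplus + expi Phi *: Pminus) *m (expi (2 * Phi * k%:~R) *: psi k).

Definition Uwalk (c : int -> 'M[C]_2) : op := fun psi => Splus (Sminus (coin c psi)).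
Definition UPhi (Phi : R) (c : int -> 'M[C]_2) : op := fun psi => Fphase Phi (Uwalk c psi).

Definition Wop (c1 c2 : int -> 'M[C]_2) : op :=
  fun psi => Splus (coin c1 (Sminus (coin c2 psi))).

Definition even_part (psi : vec) : vec := fun k => psi (2 * k).
Definition odd_part (psi : vec) : vec := fun k => psi (2 * k + 1).

End QW.

(* Main.v *)
Require Import Defs.
From HB Require Import structures.
From mathcomp Require Import all_boot all_order all_algebra.
From mathcomp Require Import spectral complex.
From mathcomp Require Import reals trigo.
From mathcomp Require Import ring.
Import Order.TTheory GRing.Theory Num.Theory.
Local Open Scope ring_scope.
Local Open Scope complex_scope.


Lemma expiD {R : realType} (a b : R) : expi (a + b) = expi a * expi b.
Proof. rewrite /expi cosD sinD /=. simpl. congr (_ +i* _); ring. Qed.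

Lemma expi_eq {R : realType} (a b : R) : a = b -> expi a = expi b.
Proof. by move->. Qed.

Lemma PPp {R : realType} : Pplus R *m Pplus R = Pplus R. Proof. exact: mul_delta_mx. Qed.
Lemma PMm {R : realType} : Pminus R *m Pminus R = Pminus R. Proof. exact: mul_delta_mx. Qed.
Lemma PPm {R : realType} : Pplus R *m Pminus R = 0. Proof. exact: mul_delta_mx_0. Qed.
Lemma PMp {R : realType} : Pminus R *m Pplus R = 0. Proof. exact: mul_delta_mx_0. Qed.

Lemma Uwalk_eq {R : realType} c (psi : vec R) n : Uwalk c psi n =
  Pplus R *m (c (n-1) *m psi (n-1)) + Pminus R *m (c (n+1) *m psi (n+1)).
Proof.
rewrite /Uwalk /Splus /Sminus /coin !mulmxDr !mulmxA PPp PMm PPm PMp !mul0mx addr0 add0r.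
by [].
Qed.

Lemma test {R : realType} (k : int) (Phi : R) : expi (Phi / 2 * (2 * k)%:~R) * expi (Phi/2 * (2*k - 1)%:~R) = expi (- (Phi/2)) * expi (2 * Phi * k%:~R).
Proof. rewrite -!expiD; apply: expi_eq. rewrite !(intrD, intrM, intrN). by field. Qed.

Lemma mZl {R : realType} (a : R[i]) (A : 'M[R[i]]_2) (B : 'M[R[i]]_(2,1)) : (a *: A) *m B = a *: (A *m B).
Proof. by rewrite scalemxAl. Qed.
Lemma mZr {R : realType} (a : R[i]) (A : 'M[R[i]]_2) (B : 'M[R[i]]_(2,1)) : A *m (a *: B) = a *: (A *m B).
Proof. by rewrite scalemxAr. Qed.
Lemma mZr2 {R : realType} (a : R[i]) (A : 'M[R[i]]_2) (B : 'M[R[i]]_2) : A *m (a *: B) = a *: (A *m B).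
Proof. by rewrite scalemxAr. Qed.
Lemma abstr {R : realType} (A B : 'M[R[i]]_2) (v1 v2 v3 : 'cV[R[i]]_2) (a b c e s t : R[i]) :
  a * b = t * s -> a * c = t * (s * e) ->
  a *: (Pplus R *m (A *m (b *: (Pplus R *m v1 + Pminus R *m v2))) + Pminus R *m (B *m (c *: (Pplus R *m v2 + Pminus R *m v3))))
 = t *: ((Pplus R + e *: Pminus R) *m (s *: (Pplus R *m (A *m (Pminus R *m v2 + Pplus R *m v1)) + Pminus R *m (B *m (Pminus R *m v3 + Pplus R *m v2))))).
Proof.
move=> h1 h2.
rewrite !(mulmxDr, mulmxDl, scalerDr, mulmxA).
rewrite !(mZl, mZr, mZr2) !mulmxA.
rewrite !(PPp, PMm, PPm, PMp, mul0mx, scaler0, addr0, add0r, scalerA).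
have -> : t * e * s = a * c by rewrite h2 -mulrA [e * s]mulrC.
by rewrite h1; congr (_ + _); apply: addrC.
Qed.

Theorem corollary3p3 (R : realType) (c : int -> 'M[R[i]]_2)
  (hc : forall k, c k \is unitarymx) (Phi : R) (psi : vec R) (k : int) :
  UPhi (Phi / 2) c (UPhi (Phi / 2) c psi) (2 * k)
    = expi (- (Phi / 2)) *:
        Ftilde Phi (Wop (fun j => c (2 * j + 1)) (fun j => c (2 * j)) (even_part psi)) k
  /\
  UPhi (Phi / 2) c (UPhi (Phi / 2) c psi) (2 * k + 1)
    = expi (Phi / 2) *:
        Ftilde Phi (Wop (fun j => c (2 * j + 2)) (fun j => c (2 * j + 1)) (odd_part psi)) k.
Proof.
split.
  rewrite /UPhi /Fphase /= Uwalk_eq /= !Uwalk_eq.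
  rewrite /Ftilde /Wop /Splus /Sminus /coin /even_part.
  have -> : 2 * k - 1 - 1 = 2 * (k - 1) by ring.
  have -> : 2 * k - 1 + 1 = 2 * k by ring.
  have -> : 2 * k + 1 - 1 = 2 * k by ring.
  have -> : 2 * k + 1 + 1 = 2 * (k + 1) by ring.
  have -> : 2 * (k - 1) + 1 = 2 * k - 1 by ring.
  have -> : k - 1 + 1 = k by ring.
  apply: abstr; rewrite -!expiD; apply: expi_eq; rewrite !(intrD, intrM, intrN); by field.
rewrite /UPhi /Fphase /= Uwalk_eq /= !Uwalk_eq.
rewrite /Ftilde /Wop /Splus /Sminus /coin /odd_part.
have -> : 2 * k + 1 - 1 = 2 * k by ring.
have -> : 2 * k + 1 + 1 = 2 * k + 2 by ring.
have -> : 2 * k + 2 - 1 = 2 * k + 1 by ring.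
have -> : 2 * k + 2 + 1 = 2 * (k + 1) + 1 by ring.
have -> : k - 1 + 1 = k by ring.
have -> : 2 * (k - 1) + 1 = 2 * k - 1 by ring.
have -> : 2 * (k - 1) + 2 = 2 * k by ring.
apply: abstr; rewrite -!expiD; apply: expi_eq; rewrite !(intrD, intrM, intrN); by field.
Qed.
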